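(* Let ''free'' mean any one of the following three notions: detection-incoherent, creation-incoherent, or detection-creation-incoherent. If $\Phi$ and $\Theta$ are free quantum operations, then $\Phi\circ\Theta$ (whenever the output of $\Theta$ matches the input of $\Phi$) and $\Phi\otimes\Theta$ are free as well.
   Context: Every finite-dimensional system carries a fixed orthonormal incoherent basis $\{|i\rangle\}$; composite systems use the product basis. The total dephasing map is $\Delta(\rho)=\sum_i|i\rangle\langle i|\rho|i\rangle\langle i|$, and on composite systems it is the tensor product of the dephasing maps of the subsystems. A quantum operation is a completely positive trace-preserving linear map. A quantum operation $\Phi$ is detection-incoherent iff $\Delta\Phi=\Delta\Phi\Delta$, creation-incoherent iff $\Phi\Delta=\Delta\Phi\Delta$, and detection-creation-incoherent iff $\Delta\Phi=\Phi\Delta$. *)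

(* Defs.v *)
(* Quantum operations on finite-dimensional systems,
   represented as maps on square matrices over an algebraically closed
   numeric field C (e.g. the complex numbers). *)
From HB Require Import structures.
From mathcomp Require Import all_boot all_order all_algebra.
From mathcomp Require Export mxtens.
Set Implicit Arguments. Unset Strict Implicit. Unset Printing Implicit Defensive.
Import Order.TTheory GRing.Theory Num.Theory.
Local Open Scope ring_scope.

Section QOps.
Variable C : numClosedFieldType.

Definition adjmx m n (A : 'M[C]_(m, n)) : 'M[C]_(n, m) := (map_mx Num.conj A)^T.

Definition psdmx n (A : 'M[C]_n) : Prop :=
  forall v : 'cV[C]_n, 0 <= (adjmx v *m A *m v) 0 0.

(* Tensor product of linear maps on matrices, defined by linear extension
   from the matrix units; composite systems use the product basis
   (the index (i,k) of 'I_(n1*n2) is mxtens_index (i,k), as in A *t B). *)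
Definition tensor_map n1 m1 n2 m2
    (Phi : 'M[C]_n1 -> 'M[C]_m1) (Theta : 'M[C]_n2 -> 'M[C]_m2)
    (X : 'M[C]_(n1 * n2)) : 'M[C]_(m1 * m2) :=
  \sum_(i < n1) \sum_(j < n1) \sum_(k < n2) \sum_(l < n2)
     X (mxtens_index (i, k)) (mxtens_index (j, l))
       *: (Phi (delta_mx i j) *t Theta (delta_mx k l)).

Definition trace_preserving n m (Phi : 'M[C]_n -> 'M[C]_m) : Prop :=
  forall X, \tr (Phi X) = \tr X.

Definition completely_positive n m (Phi : 'M[C]_n -> 'M[C]_m) : Prop :=
  forall (k : nat) (X : 'M[C]_(k * n)),
    psdmx X -> psdmx (tensor_map (@id 'M[C]_k) Phi X).

Definition quantum_operation n m (Phi : 'M[C]_n -> 'M[C]_m) : Prop :=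
  [/\ linear Phi, trace_preserving Phi & completely_positive Phi].

(* total dephasing in the fixed (standard) incoherent basis *)
Definition dephase n (X : 'M[C]_n) : 'M[C]_n :=
  \matrix_(i, j) (if i == j then X i j else 0).

Definition dephase2 n1 n2 : 'M[C]_(n1 * n2) -> 'M[C]_(n1 * n2) :=
  tensor_map (@dephase n1) (@dephase n2).

Definition detection_incoherent n m (Din : 'M[C]_n -> 'M[C]_n)
    (Dout : 'M[C]_m -> 'M[C]_m) (Phi : 'M[C]_n -> 'M[C]_m) : Prop :=
  Dout \o Phi =1 Dout \o Phi \o Din.

Definition creation_incoherent n m (Din : 'M[C]_n -> 'M[C]_n)
    (Dout : 'M[C]_m -> 'M[C]_m) (Phi : 'M[C]_n -> 'M[C]_m) : Prop :=
  Phi \o Din =1 Dout \o Phi \o Din.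

Definition detection_creation_incoherent n m (Din : 'M[C]_n -> 'M[C]_n)
    (Dout : 'M[C]_m -> 'M[C]_m) (Phi : 'M[C]_n -> 'M[C]_m) : Prop :=
  Dout \o Phi =1 Phi \o Din.

End QOps.

Inductive free_kind := DI | CI | DCI.

Definition free_wrt (C : numClosedFieldType) (f : free_kind) n m
    (Din : 'M[C]_n -> 'M[C]_n) (Dout : 'M[C]_m -> 'M[C]_m)
    (Phi : 'M[C]_n -> 'M[C]_m) : Prop :=
  match f with
  | DI => detection_incoherent Din Dout Phi
  | CI => creation_incoherent Din Dout Phi
  | DCI => detection_creation_incoherent Din Dout Phi
  end.

Definition free_op (C : numClosedFieldType) (f : free_kind) n m
    (Phi : 'M[C]_n -> 'M[C]_m) : Prop :=
  quantum_operation Phi /\ free_wrt f (@dephase C n) (@dephase C m) Phi.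

(* Main.v *)
Require Import Defs.
From HB Require Import structures.
From mathcomp Require Import all_boot all_order all_algebra.
From mathcomp Require Import mxtens.
Set Implicit Arguments. Unset Strict Implicit. Unset Printing Implicit Defensive.
Import Order.TTheory GRing.Theory Num.Theory.
Local Open Scope ring_scope.


Section H.
Variable C : numClosedFieldType.
Local Notation idx := mxtens_index.
Local Notation unidx := mxtens_unindex.

Lemma lin0 n m (F : 'M[C]_n -> 'M[C]_m) : linear F -> F 0 = 0.
Proof.
move=> L; have := L 1 0 0; rewrite !scale1r addr0 => h.
by apply: (@addrI _ (F 0)); rewrite addr0 -h.
Qed.

Lemma linD n m (F : 'M[C]_n -> 'M[C]_m) : linear F -> forall u v, F (u + v) = F u + F v.
Proof. by move=> L u v; have := L 1 u v; rewrite !scale1r. Qed.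

Lemma linZ n m (F : 'M[C]_n -> 'M[C]_m) : linear F -> forall a u, F (a *: u) = a *: F u.
Proof. by move=> L a u; have := L a u 0; rewrite addr0 (lin0 L) addr0. Qed.

Lemma lin_sum n m (F : 'M[C]_n -> 'M[C]_m) : linear F ->
  forall I (r : seq I) (P : pred I) (G : I -> 'M[C]_n),
  F (\sum_(i <- r | P i) G i) = \sum_(i <- r | P i) F (G i).
Proof. move=> L I r P G; apply: big_morph; [exact: linD | exact: lin0]. Qed.

Lemma lin_entry n m (F : 'M[C]_n -> 'M[C]_m) : linear F -> forall M p q,
  F M p q = \sum_i \sum_j M i j * F (delta_mx i j) p q.
Proof.
move=> L M p q; rewrite {1}(matrix_sum_delta M) lin_sum // summxE.
apply: eq_bigr => i _; rewrite lin_sum // summxE.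
by apply: eq_bigr => j _; rewrite linZ // mxE.
Qed.

Lemma sum_idx m n (F : 'I_(m * n) -> C) :
  \sum_K F K = \sum_(i < m) \sum_(k < n) F (idx (i, k)).
Proof.
rewrite (reindex (@mxtens_index m n)) /=; last first.
  by apply: onW_bij; exists (@mxtens_unindex m n); [apply: mxtens_indexK | apply: mxtens_unindexK].
rewrite pair_big /=; by apply: eq_bigr => -[i k].
Qed.

Lemma eq_tm m n p q (A B : 'M[C]_(m * n, p * q)) :
  (forall a c b d, A (idx (a, c)) (idx (b, d)) = B (idx (a, c)) (idx (b, d))) -> A = B.
Proof.
move=> h; apply/matrixP => x y.
rewrite -[x]mxtens_unindexK -[y]mxtens_unindexK.
by case: (unidx x) => a c; case: (unidx y) => b d; apply: h.
Qed.

Lemma tm_entry n1 m1 n2 m2 (Phi : 'M[C]_n1 -> 'M[C]_m1) (Theta : 'M[C]_n2 -> 'M[C]_m2) X p c q d :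
  tensor_map Phi Theta X (idx (p, c)) (idx (q, d)) =
  \sum_i \sum_j \sum_k \sum_l X (idx (i, k)) (idx (j, l)) *
     (Phi (delta_mx i j) p q * Theta (delta_mx k l) c d).
Proof.
rewrite /tensor_map summxE; apply: eq_bigr => i _; rewrite summxE; apply: eq_bigr => j _.
rewrite summxE; apply: eq_bigr => k _; rewrite summxE; apply: eq_bigr => l _.
by rewrite mxE tensmxE.
Qed.

Lemma dE m n (i0 j0 i j : 'I_m) (k0 l0 k l : 'I_n) :
  @delta_mx C _ _ (idx (i0, k0)) (idx (j0, l0)) (idx (i, k)) (idx (j, l)) =
  ((i == i0) && (k == k0) && ((j == j0) && (l == l0)))%:R.
Proof.
by rewrite mxE !(inj_eq (can_inj (@mxtens_indexK _ _))) !xpair_eqE.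
Qed.

Lemma tm_delta n1 m1 n2 m2 (Phi : 'M[C]_n1 -> 'M[C]_m1) (Theta : 'M[C]_n2 -> 'M[C]_m2) i0 j0 k0 l0 :
  tensor_map Phi Theta (delta_mx (idx (i0, k0)) (idx (j0, l0))) =
  Phi (delta_mx i0 j0) *t Theta (delta_mx k0 l0).
Proof.
apply: eq_tm => p c q d; rewrite tm_entry tensmxE.
rewrite (bigD1 i0) //= [X in _ + X]big1 ?addr0; last first.
  move=> i ne; apply: big1 => j _; apply: big1 => k _; apply: big1 => l _.
  by rewrite dE (negbTE ne) ?andbF ?andFb /= mul0r.
rewrite (bigD1 j0) //= [X in _ + X]big1 ?addr0; last first.
  move=> j ne; apply: big1 => k _; apply: big1 => l _.
  by rewrite dE (negbTE ne) ?andbF ?andFb /= mul0r.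
rewrite (bigD1 k0) //= [X in _ + X]big1 ?addr0; last first.
  move=> k ne; apply: big1 => l _.
  by rewrite dE (negbTE ne) ?andbF ?andFb /= mul0r.
rewrite (bigD1 l0) //= [X in _ + X]big1 ?addr0; last first.
  move=> l ne.
  by rewrite dE (negbTE ne) ?andbF ?andFb /= mul0r.
by rewrite dE !eqxx mul1r.
Qed.

Lemma tm_idl k n m (Psi : 'M[C]_n -> 'M[C]_m) (X : 'M[C]_(k * n)) a p b q :
  tensor_map (@id 'M[C]_k) Psi X (idx (a, p)) (idx (b, q)) =
  \sum_K \sum_L X (idx (a, K)) (idx (b, L)) * Psi (delta_mx K L) p q.
Proof.
rewrite tm_entry (bigD1 a) //= [X in _ + X]big1 ?addr0; last first.
  move=> i ne; apply: big1 => j _; apply: big1 => K _; apply: big1 => L _.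
  by rewrite mxE eq_sym (negbTE ne) mul0r mulr0.
rewrite (bigD1 b) //= [X in _ + X]big1 ?addr0; last first.
  move=> j ne; apply: big1 => K _; apply: big1 => L _.
  by rewrite mxE [b == j]eq_sym (negbTE ne) andbF mul0r mulr0.
apply: eq_bigr => K _; apply: eq_bigr => L _.
by rewrite mxE !eqxx mul1r.
Qed.

End H.


Section H2.
Variable C : numClosedFieldType.
Local Notation idx := mxtens_index.
Local Notation unidx := mxtens_unindex.

Lemma tm_linear n1 m1 n2 m2 (Phi : 'M[C]_n1 -> 'M[C]_m1) (Theta : 'M[C]_n2 -> 'M[C]_m2) :
  linear (tensor_map Phi Theta).
Proof.
move=> a X Y; rewrite /tensor_map scaler_sumr -big_split; apply: eq_bigr => i _.
rewrite scaler_sumr -big_split; apply: eq_bigr => j _.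
rewrite scaler_sumr -big_split; apply: eq_bigr => k _.
rewrite scaler_sumr -big_split; apply: eq_bigr => l _.
by rewrite !mxE scalerDl scalerA.
Qed.

Lemma tm_tens n1 m1 n2 m2 (A : 'M[C]_n1 -> 'M[C]_m1) (B : 'M[C]_n2 -> 'M[C]_m2) M N :
  linear A -> linear B -> tensor_map A B (M *t N) = A M *t B N.
Proof.
move=> LA LB; apply: eq_tm => p c q d.
rewrite tm_entry tensmxE (lin_entry LA) (lin_entry LB).
rewrite mulr_suml; apply: eq_bigr => i _; rewrite mulr_suml; apply: eq_bigr => j _.
rewrite mulr_sumr; apply: eq_bigr => k _; rewrite mulr_sumr; apply: eq_bigr => l _.
by rewrite tensmxE mulrACA.
Qed.

Lemma lin_comp n m p (A : 'M[C]_m -> 'M[C]_p) (B : 'M[C]_n -> 'M[C]_m) :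
  linear A -> linear B -> linear (A \o B).
Proof. by move=> LA LB a u v /=; rewrite LB LA. Qed.

Lemma lin_id n : linear (@id 'M[C]_n).
Proof. by []. Qed.

Lemma lin_ext n m (F G : 'M[C]_n -> 'M[C]_m) : linear F -> linear G ->
  (forall a b, F (delta_mx a b) = G (delta_mx a b)) -> F =1 G.
Proof.
move=> LF LG h X; rewrite (matrix_sum_delta X) !(lin_sum LF) !(lin_sum LG).
apply: eq_bigr => i _; rewrite !(lin_sum LF) !(lin_sum LG).
by apply: eq_bigr => j _; rewrite (linZ LF) (linZ LG) h.
Qed.

Lemma tm_comp n1 m1 p1 n2 m2 p2 (A : 'M[C]_m1 -> 'M[C]_p1) (B : 'M[C]_m2 -> 'M[C]_p2)
   (Cc : 'M[C]_n1 -> 'M[C]_m1) (D : 'M[C]_n2 -> 'M[C]_m2) :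
  linear A -> linear B -> linear Cc -> linear D ->
  forall X, tensor_map A B (tensor_map Cc D X) = tensor_map (A \o Cc) (B \o D) X.
Proof.
move=> LA LB LC LD; apply: (@lin_ext _ _ (tensor_map A B \o tensor_map Cc D)).
- exact: lin_comp (tm_linear _ _) (tm_linear _ _).
- exact: tm_linear.
move=> a b; rewrite -[a]mxtens_unindexK -[b]mxtens_unindexK.
case: (unidx a) => i k; case: (unidx b) => j l /=.
by rewrite !tm_delta tm_tens.
Qed.

Lemma tm_ext n1 m1 n2 m2 (A A' : 'M[C]_n1 -> 'M[C]_m1) (B B' : 'M[C]_n2 -> 'M[C]_m2) :
  A =1 A' -> B =1 B' -> tensor_map A B =1 tensor_map A' B'.
Proof.
move=> hA hB X; rewrite /tensor_map; apply: eq_bigr => i _; apply: eq_bigr => j _.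
by apply: eq_bigr => k _; apply: eq_bigr => l _; rewrite hA hB.
Qed.

Lemma tr_delta n (i j : 'I_n) : \tr (delta_mx i j : 'M[C]_n) = (i == j)%:R.
Proof.
rewrite /mxtrace (bigD1 i) //= [X in _ + X]big1 ?addr0 ?mxE ?eqxx //.
by move=> a ne; rewrite mxE (negbTE ne).
Qed.

Lemma tr_tens m n (A : 'M[C]_m) (B : 'M[C]_n) : \tr (A *t B) = \tr A * \tr B.
Proof.
rewrite /mxtrace sum_idx mulr_suml; apply: eq_bigr => i _.
by rewrite mulr_sumr; apply: eq_bigr => k _; rewrite tensmxE.
Qed.

Lemma tr_sum m I (r : seq I) (P : pred I) (F : I -> 'M[C]_m) :
  \tr (\sum_(i <- r | P i) F i) = \sum_(i <- r | P i) \tr (F i).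
Proof. by apply: big_morph; [exact: mxtraceD | exact: mxtrace0]. Qed.

Lemma tm_tp n1 m1 n2 m2 (Phi : 'M[C]_n1 -> 'M[C]_m1) (Theta : 'M[C]_n2 -> 'M[C]_m2) :
  trace_preserving Phi -> trace_preserving Theta -> trace_preserving (tensor_map Phi Theta).
Proof.
move=> TP TT X; rewrite /tensor_map tr_sum [RHS]/mxtrace [RHS]sum_idx; apply: eq_bigr => i _.
rewrite tr_sum (bigD1 i) //= [X in _ + X]big1 ?addr0; last first.
  move=> j ne; rewrite tr_sum; apply: big1 => k _; rewrite tr_sum; apply: big1 => l _.
  by rewrite mxtraceZ tr_tens TP TT !tr_delta eq_sym (negbTE ne) mul0r mulr0.
rewrite tr_sum; apply: eq_bigr => k _; rewrite tr_sum.
rewrite (bigD1 k) //= [X in _ + X]big1 ?addr0; last first.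
  by move=> l ne; rewrite mxtraceZ tr_tens TP TT !tr_delta eq_sym (negbTE ne) mulr0 mulr0.
by rewrite mxtraceZ tr_tens TP TT !tr_delta !eqxx mulr1 mulr1.
Qed.

End H2.


Section H3.
Variable C : numClosedFieldType.
Local Notation idx := mxtens_index.
Local Notation unidx := mxtens_unindex.

Lemma qf n (A : 'M[C]_n) (v : 'cV[C]_n) :
  (adjmx v *m A *m v) 0 0 = \sum_a \sum_b (v a 0)^* * A a b * v b 0.
Proof.
rewrite mxE; under eq_bigr do rewrite mxE big_distrl /=.
rewrite exchange_big; apply: eq_bigr => a _; apply: eq_bigr => b _.
by rewrite !mxE.
Qed.

Lemma psd_reindex M N (s : 'I_M -> 'I_N) (s' : 'I_N -> 'I_M) :
  cancel s s' -> cancel s' s -> forall X : 'M[C]_N,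
  psdmx X -> psdmx (\matrix_(a, b) X (s a) (s b)).
Proof.
move=> h1 h2 X pX v; have := pX (\col_i v (s' i) 0); rewrite !qf.
have bs : {on [pred i | true], bijective s} by apply: onW_bij; exists s'.
rewrite (reindex s bs); under eq_bigr do rewrite (reindex s bs).
congr (_ <= _); apply: eq_bigr => a _; apply: eq_bigr => b _.
by rewrite !mxE !h1.
Qed.

Definition asc m n p (u : 'I_(m * n * p)) : 'I_(m * (n * p)) :=
  idx ((unidx (unidx u).1).1, idx ((unidx (unidx u).1).2, (unidx u).2)).
Definition asc' m n p (K : 'I_(m * (n * p))) : 'I_(m * n * p) :=
  idx (idx ((unidx K).1, (unidx (unidx K).2).1), (unidx (unidx K).2).2).
Definition sw m n p (u : 'I_(m * n * p)) : 'I_(m * (p * n)) :=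
  idx ((unidx (unidx u).1).1, idx ((unidx u).2, (unidx (unidx u).1).2)).
Definition sw' m n p (K : 'I_(m * (p * n))) : 'I_(m * n * p) :=
  idx (idx ((unidx K).1, (unidx (unidx K).2).2), (unidx (unidx K).2).1).

Lemma ascE m n p a i k : @asc m n p (idx (idx (a, i), k)) = idx (a, idx (i, k)).
Proof. by rewrite /asc !mxtens_indexK. Qed.
Lemma asc'E m n p a i k : @asc' m n p (idx (a, idx (i, k))) = idx (idx (a, i), k).
Proof. by rewrite /asc' !mxtens_indexK. Qed.
Lemma swE m n p a c i : @sw m n p (idx (idx (a, c), i)) = idx (a, idx (i, c)).
Proof. by rewrite /sw !mxtens_indexK. Qed.
Lemma sw'E m n p a c i : @sw' m n p (idx (a, idx (i, c))) = idx (idx (a, c), i).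
Proof. by rewrite /sw' !mxtens_indexK. Qed.

Lemma ascK m n p : cancel (@asc m n p) (@asc' m n p).
Proof.
move=> u; rewrite -[u]mxtens_unindexK; case: (unidx u) => ai k.
by rewrite -[ai]mxtens_unindexK; case: (unidx ai) => a i; rewrite ascE asc'E.
Qed.
Lemma asc'K m n p : cancel (@asc' m n p) (@asc m n p).
Proof.
move=> u; rewrite -[u]mxtens_unindexK; case: (unidx u) => a ik.
by rewrite -[ik]mxtens_unindexK; case: (unidx ik) => i k; rewrite asc'E ascE.
Qed.
Lemma swK m n p : cancel (@sw m n p) (@sw' m n p).
Proof.
move=> u; rewrite -[u]mxtens_unindexK; case: (unidx u) => ai k.
by rewrite -[ai]mxtens_unindexK; case: (unidx ai) => a i; rewrite swE sw'E.
Qed.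
Lemma sw'K m n p : cancel (@sw' m n p) (@sw m n p).
Proof.
move=> u; rewrite -[u]mxtens_unindexK; case: (unidx u) => a ik.
by rewrite -[ik]mxtens_unindexK; case: (unidx ik) => i k; rewrite sw'E swE.
Qed.

Lemma collapse_tm n1 m1 n2 m2 (Phi : 'M[C]_n1 -> 'M[C]_m1) (Theta : 'M[C]_n2 -> 'M[C]_m2)
   (F : 'I_(n1 * n2) -> 'I_(n1 * n2) -> C) p c q d :
  \sum_K \sum_L F K L * tensor_map Phi Theta (delta_mx K L) (idx (p, c)) (idx (q, d)) =
  \sum_i \sum_j \sum_k \sum_l F (idx (i, k)) (idx (j, l)) *
      (Phi (delta_mx i j) p q * Theta (delta_mx k l) c d).
Proof.
rewrite sum_idx; apply: eq_bigr => i _; rewrite [RHS]exchange_big; apply: eq_bigr => k _.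
rewrite sum_idx; apply: eq_bigr => j _; apply: eq_bigr => l _.
by rewrite tm_delta tensmxE.
Qed.

End H3.


Section H4.
Variable C : numClosedFieldType.
Local Notation idx := mxtens_index.
Local Notation unidx := mxtens_unindex.

Lemma tm_cp n1 m1 n2 m2 (Phi : 'M[C]_n1 -> 'M[C]_m1) (Theta : 'M[C]_n2 -> 'M[C]_m2) :
  completely_positive Phi -> completely_positive Theta ->
  completely_positive (tensor_map Phi Theta).
Proof.
move=> CPP CPT k X pX.
have P1 := psd_reindex (@ascK k n1 n2) (@asc'K k n1 n2) pX.
have P2 := CPT (k * n1)%N _ P1.
have P3 := psd_reindex (@asc'K k n1 m2) (@ascK k n1 m2) P2.
have P4 := psd_reindex (@swK k m2 n1) (@sw'K k m2 n1) P3.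
have P5 := CPP (k * m2)%N _ P4.
have P6 := psd_reindex (@sw'K k m2 m1) (@swK k m2 m1) P5.
move: P6; set Y := (X in psdmx X -> _).
suff -> : tensor_map (@id 'M[C]_k) (tensor_map Phi Theta) X = Y by [].
rewrite /Y; apply: eq_tm => a P b Q.
rewrite -[P]mxtens_unindexK -[Q]mxtens_unindexK.
case: (unidx P) => p c; case: (unidx Q) => q d.
rewrite tm_idl collapse_tm !mxE !sw'E tm_idl.
apply: eq_bigr => i _; apply: eq_bigr => j _.
rewrite (mxE _ (fun a0 b0 => _)) !swE (mxE _ (fun a0 b0 => _)) !asc'E tm_idl mulr_suml; apply: eq_bigr => k' _.
rewrite mulr_suml; apply: eq_bigr => l' _.
by rewrite !mxE !ascE -mulrA [Theta _ c d * _]mulrC.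
Qed.

End H4.


Lemma lin_dephase (C : numClosedFieldType) n : linear (@dephase C n).
Proof.
move=> a X Y; apply/matrixP => i j; rewrite !mxE.
by case: (i == j); rewrite ?mulr0 ?addr0.
Qed.

Theorem lemma11 (C : numClosedFieldType) (f : free_kind) :
  (forall (n m p : nat) (Phi : 'M[C]_m -> 'M[C]_p) (Theta : 'M[C]_n -> 'M[C]_m),
      free_op f Phi -> free_op f Theta -> free_op f (Phi \o Theta)) /\
  (forall (n1 m1 n2 m2 : nat)
          (Phi : 'M[C]_n1 -> 'M[C]_m1) (Theta : 'M[C]_n2 -> 'M[C]_m2),
      free_op f Phi -> free_op f Theta ->
      quantum_operation (tensor_map Phi Theta) /\
      free_wrt f (@dephase2 C n1 n2) (@dephase2 C m1 m2) (tensor_map Phi Theta)).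
Proof.
split.
- move=> n m p Phi Theta [[LP TP CP] hP] [[LT TT CT] hT]; split.
    split.
    + exact: lin_comp.
    + by move=> X /=; rewrite TP TT.
    + move=> k X pX.
      have -> : tensor_map (@id 'M[C]_k) (Phi \o Theta) X =
                tensor_map id Phi (tensor_map id Theta X).
        by rewrite (tm_comp (@lin_id C k) LP (@lin_id C k) LT).
      exact/CP/CT.
  case: f hP hT => /= hP hT x /=.
  + have h1 := hP (Theta x); have h2 := hT x; have h3 := hP (Theta (dephase x)).
    simpl in *; by rewrite h1 h2 -h3.
  + have h2 := hT x; simpl in *; rewrite h2; exact: hP.
  + have h1 := hP (Theta x); have h2 := hT x; simpl in *; by rewrite h1 h2.
- move=> n1 m1 n2 m2 Phi Theta [[LP TP CP] hP] [[LT TT CT] hT]; split.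
    split; [exact: tm_linear | exact: tm_tp | exact: tm_cp].
  have LD := @lin_dephase C.
  case: f hP hT => /= hP hT x /=; rewrite /dephase2.
  + rewrite (tm_comp (LD _) (LD _) LP LT) (tm_comp LP LT (LD _) (LD _)).
    rewrite (tm_comp (LD _) (LD _) (lin_comp LP (LD _)) (lin_comp LT (LD _))).
    by apply: tm_ext.
  + rewrite (tm_comp LP LT (LD _) (LD _)).
    rewrite (tm_comp (LD _) (LD _) (lin_comp LP (LD _)) (lin_comp LT (LD _))).
    by apply: tm_ext.
  + rewrite (tm_comp (LD _) (LD _) LP LT) (tm_comp LP LT (LD _) (LD _)).
    by apply: tm_ext.
Qed.
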